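(* Let $f\in\mathbb{R}[x,y]$ and $p=(x_0,y_0)$ with $f(p)=0$ and $\frac{\partial f}{\partial y}(p)\neq0$, and let $g:I\to J$ be the differentiable function on open intervals $I\ni x_0$, $J\ni y_0$ with $g(x_0)=y_0$ and $\{(x,y)\in I\times J: f(x,y)=0\}=\{(x,g(x)):x\in I\}$. Let $[a,b]\subseteq I$ be a closed bounded interval and suppose $g$ is not a linear function. Then $g$ has only finitely many inflection points and local minimum points in $[a,b]$. *)

(* Defs.v *)
From HB Require Import structures.
From mathcomp Require Import all_boot all_order all_algebra.
From mathcomp Require Import all_classical all_reals all_analysis.
Set Implicit Arguments. Unset Strict Implicit. Unset Printing Implicit Defensive.
Import Order.TTheory GRing.Theory Num.Theory.
Import numFieldNormedType.Exports.
Local Open Scope classical_set_scope.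
Local Open Scope ring_scope.

(* A bivariate real polynomial f(x,y) is represented as f : {poly {poly R}},
   i.e. a polynomial in y whose coefficients are polynomials in x. *)
Definition peval2 (R : realType) (f : {poly {poly R}}) (x y : R) : R :=
  (f.[y%:P]).[x].

Definition pdy (R : realType) (f : {poly {poly R}}) (x y : R) : R :=
  peval2 f^`() x y.

Definition oitv (R : realType) (l u : \bar R) : set R :=
  [set x | (l < x%:E)%E /\ (x%:E < u)%E].

Definition convex_on (R : realType) (g : R -> R) (A : set R) : Prop :=
  forall x y t, A x -> A y -> 0 <= t -> t <= 1 ->
    g (t * x + (1 - t) * y) <= t * g x + (1 - t) * g y.

Definition concave_on (R : realType) (g : R -> R) (A : set R) : Prop :=
  convex_on (fun x => - g x) A.

Definition inflection_point (R : realType) (g : R -> R) (x : R) : Prop :=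
  exists2 d : R, 0 < d &
    (convex_on g [set z | x - d <= z <= x] /\ concave_on g [set z | x <= z <= x + d])
    \/ (concave_on g [set z | x - d <= z <= x] /\ convex_on g [set z | x <= z <= x + d]).

Definition local_min_point (R : realType) (g : R -> R) (x : R) : Prop :=
  \forall y \near x, g x <= g y.

(* Main.v *)
Require Import Defs.
From HB Require Import structures.
From mathcomp Require Import all_boot all_order all_algebra.
From mathcomp Require Import all_classical all_reals all_analysis.
Import Order.TTheory GRing.Theory Num.Theory.
Import numFieldNormedType.Exports.
Local Open Scope classical_set_scope.
Local Open Scope ring_scope.
From mathcomp Require Import lra zify ring.
Set Implicit Arguments. Unset Strict Implicit. Unset Printing Implicit Defensive.
Import Pdiv.Idomain.

Section Alg.
Variable R : realType.
Implicit Types (P Q : {poly {poly R}}) (x y : R).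

Lemma pevalD P Q x y : peval2 (P + Q) x y = peval2 P x y + peval2 Q x y.
Proof. by rewrite /peval2 !hornerD. Qed.
Lemma pevalM P Q x y : peval2 (P * Q) x y = peval2 P x y * peval2 Q x y.
Proof. by rewrite /peval2 !hornerM. Qed.
Lemma pevalZ (c : {poly R}) P x y : peval2 (c *: P) x y = c.[x] * peval2 P x y.
Proof. by rewrite /peval2 hornerZ hornerM. Qed.
Lemma pevalC (c : {poly R}) x y : peval2 c%:P x y = c.[x].
Proof. by rewrite /peval2 hornerC. Qed.
Lemma pevalX x y : peval2 'X x y = y.
Proof. by rewrite /peval2 hornerX hornerC. Qed.
Lemma pevalN P x y : peval2 (- P) x y = - peval2 P x y.
Proof. by rewrite /peval2 !hornerN. Qed.
Lemma pevalB P Q x y : peval2 (P - Q) x y = peval2 P x y - peval2 Q x y.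
Proof. by rewrite pevalD pevalN. Qed.
Lemma peval0 x y : peval2 0 x y = 0.
Proof. by rewrite /peval2 !horner0. Qed.
Lemma pevalMX P (c : {poly R}) x y :
  peval2 (P * 'X + c%:P) x y = peval2 P x y * y + c.[x].
Proof. by rewrite pevalD pevalM pevalX pevalC. Qed.

Definition dx P : {poly {poly R}} := map_poly (@deriv R) P.

Lemma dxMX P (c : {poly R}) : dx (P * 'X + c%:P) = dx P * 'X + (c^`())%:P.
Proof.
apply/polyP => i; rewrite /dx coef_map_id0 ?deriv0 //.
rewrite !coefD !coefMX !coefC coef_map_id0 ?deriv0 //.
case: i => [|i] /=.
  rewrite !add0r. by [].
by rewrite !addr0.
Qed.

Lemma peval_chain P (g : R -> R) x dg :
  is_derive x 1 g dg ->
  is_derive x 1 (fun t => peval2 P t (g t))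
    (peval2 (dx P) x (g x) + peval2 P^`() x (g x) * dg).
Proof.
move=> hg; elim/poly_ind: P => [|P c IH].
  have -> : (fun t => peval2 (0 : {poly {poly R}}) t (g t)) = cst 0.
    by apply/funext => t; rewrite peval0.
  rewrite /dx map_poly0 deriv0 peval0 add0r mul0r; exact: is_derive_cst.
have -> : (fun t => peval2 (P * 'X + c%:P) t (g t)) =
   ((fun t => peval2 P t (g t)) * g + horner c)%R.
  by apply/funext => t; rewrite pevalMX.
rewrite dxMX derivMXaddC !pevalMX pevalD pevalM pevalX.
apply: is_derive_eq.
rewrite /GRing.scale /=. lra.
Qed.
End Alg.

Section Ev.
Variable R : realType.

Lemma nearE (x : R) (p : R -> Prop) :
  (\forall y \near x, p y) <-> exists2 d : R, 0 < d & forall y, `|x - y| < d -> p y.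
Proof.
rewrite nbhs_normP; split.
  by move=> [d d0 H]; exists d => // y hy; apply: H.
by move=> [d d0 H]; exists d => // y hy; apply: H.
Qed.

Definition iv (c e : R) (b : bool) x := if b then c < x < c + e else c - e < x < c.
Definition ev (c : R) (b : bool) (p : R -> Prop) :=
  exists2 e : R, 0 < e & forall x, iv c e b x -> p x.

Lemma iv_mono c e1 e2 b x : e1 <= e2 -> iv c e1 b x -> iv c e2 b x.
Proof. by rewrite /iv; case: b => le /andP[h1 h2]; apply/andP; split; lra. Qed.

Lemma iv_conv c e b x y z : iv c e b x -> iv c e b z -> x <= y <= z -> iv c e b y.
Proof. by rewrite /iv; case: b => /andP[h1 h2] /andP[h3 h4] /andP[h5 h6]; apply/andP; split; lra. Qed.

Lemma iv_ex c e b : 0 < e -> exists x, iv c e b x.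
Proof.
move=> e0; rewrite /iv; case: b.
  by exists (c + e / 2); apply/andP; split; lra.
by exists (c - e / 2); apply/andP; split; lra.
Qed.

Lemma iv_open c e b x : iv c e b x -> exists2 d : R, 0 < d & forall y, `|x - y| < d -> iv c e b y.
Proof.
rewrite /iv; case: b => /andP[h1 h2].
  exists (Num.min (x - c) (c + e - x)); first by rewrite lt_min; apply/andP; split; lra.
  move=> y; rewrite lt_min => /andP[]; rewrite !ltr_norml => /andP[a1 a2] /andP[a3 a4].
  by apply/andP; split; lra.
exists (Num.min (x - (c - e)) (c - x)); first by rewrite lt_min; apply/andP; split; lra.
move=> y; rewrite lt_min => /andP[]; rewrite !ltr_norml => /andP[a1 a2] /andP[a3 a4].
by apply/andP; split; lra.
Qed.

Lemma iv_punct c e b x : iv c e b x -> x != c /\ `|x - c| < e.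
Proof.
rewrite /iv; case: b => /andP[h1 h2]; split; rewrite ?ltr_norml; try (apply/andP; split; lra).
  by rewrite gt_eqF.
by rewrite lt_eqF.
Qed.

Lemma ev_and c b p q : ev c b p -> ev c b q -> ev c b (fun x => p x /\ q x).
Proof.
move=> [e1 e10 H1] [e2 e20 H2]; exists (Num.min e1 e2); first by rewrite lt_min e10 e20.
move=> x hx; split.
  by apply: H1; apply: iv_mono hx; rewrite ge_min lexx.
by apply: H2; apply: iv_mono hx; rewrite ge_min lexx orbT.
Qed.

Lemma ev_mono c b (p q : R -> Prop) : (forall x, p x -> q x) -> ev c b p -> ev c b q.
Proof. by move=> pq [e e0 H]; exists e => // x /H /pq. Qed.

Lemma ev_ex c b p : ev c b p -> exists x, p x.
Proof. by move=> [e e0 H]; have [x hx] := iv_ex c b e0; exists x; apply: H. Qed.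

Lemma ev_loc c b p : ev c b p -> ev c b (fun x => \forall y \near x, p y).
Proof.
move=> [e e0 H]; exists e => // x hx; apply/nearE.
by have [d d0 Hd] := iv_open hx; exists d => // y /Hd /H.
Qed.

Lemma ev_punct c b (p : R -> Prop) : (exists2 d : R, 0 < d & forall y, y != c -> `|y - c| < d -> p y) -> ev c b p.
Proof. by move=> [d d0 H]; exists d => // x /iv_punct [] /H. Qed.

Lemma ev_nbhs c b (p : R -> Prop) : (\forall y \near c, p y) -> ev c b p.
Proof.
move=> /nearE [d d0 H]; apply: ev_punct; exists d => // y _ hy; apply: H.
by rewrite distrC.
Qed.

Lemma poly_punct (q : {poly R}) c : q != 0 ->
  exists2 d : R, 0 < d & forall y, y != c -> `|y - c| < d -> q.[y] != 0.
Proof.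
move=> q0; have [m [q1 Hq1 Eq]] := multiplicity_XsubC q c.
rewrite q0 /= in Hq1.
have : \forall y \near c, q1.[y] != 0.
  have HH := cvgr_neq0 (f:=horner q1) (q1.[c]) (fun t => @continuous_horner R q1 c t) Hq1.
  exact: HH.
move=> /nearE [d d0 H]; exists d => // y yc hy.
rewrite Eq hornerM mulf_neq0 //; first by apply: H; rewrite distrC.
by rewrite horner_exp hornerD hornerN hornerX hornerC expf_neq0 // subr_eq0.
Qed.

Lemma ev_poly c b (q : {poly R}) : q != 0 -> ev c b (fun x => q.[x] != 0).
Proof. by move=> q0; apply: ev_punct; apply: poly_punct. Qed.

Lemma ev_conn c b (h1 h2 : R -> R) :
  ev c b (fun x => {for x, continuous h1} /\ {for x, continuous h2}) ->
  ev c b (fun x => (h1 x = 0 \/ h2 x = 0) /\ ~ (h1 x = 0 /\ h2 x = 0)) ->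
  ev c b (fun x => h1 x = 0) \/ ev c b (fun x => h2 x = 0).
Proof.
move=> E1 E2; have [e e0 H] := ev_and E1 E2.
have hyp : forall x, iv c e b x -> (h1 x = 0 \/ h2 x = 0) /\ ~ (h1 x = 0 /\ h2 x = 0)
  by move=> x /H [].
case: (pselect (exists x, iv c e b x /\ h1 x != 0)) => [[x1 [ix1 hx1]]|N]; last first.
  left; exists e => // x hx; apply/eqP; apply/negPn/negP => hn; apply: N; exists x; by [].
right; exists e => // x2 ix2; apply/eqP; apply/negPn/negP => hx2.
pose phi := fun t => `|h1 t| - `|h2 t|.
have phi0 : forall t, iv c e b t -> phi t != 0.
  move=> t /hyp [[] E nE]; rewrite /phi E normr0.
    by rewrite sub0r oppr_eq0 normr_eq0; apply/eqP => EE; apply: nE.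
  by rewrite subr0 normr_eq0; apply/eqP => EE; apply: nE.
have phisgn : forall t, iv c e b t -> (h1 t != 0 -> 0 < phi t) /\ (h2 t != 0 -> phi t < 0).
  move=> t /hyp [[] E nE]; rewrite /phi E normr0; split => hh.
  - by rewrite eqxx in hh.
  - by rewrite sub0r oppr_lt0 normr_gt0.
  - by rewrite subr0 normr_gt0.
  - by rewrite eqxx in hh.
have [p1 _] := phisgn x1 ix1; have [_ p2] := phisgn x2 ix2.
have {p1}p1 := p1 hx1; have {p2}p2 := p2 hx2.
have cont : forall t, iv c e b t -> {for t, continuous phi}.
  move=> t /H [[c1 c2] _]; apply: continuousB; apply: continuous_comp => //; exact: norm_continuous.
have key : forall u v, iv c e b u -> iv c e b v -> u <= v ->
    Num.min (phi u) (phi v) <= 0 <= Num.max (phi u) (phi v) -> False.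
  move=> u v iu iv' uv hm.
  have cin : {within `[u, v], continuous phi}.
    apply: continuous_in_subspaceT => z zi; apply: cont; apply: (iv_conv iu iv').
    move: zi; rewrite ?inE ?in_itv /=.
    by [].
  have [z zi pz] := IVT uv cin hm.
  have zi' : u <= z <= v by move: zi; rewrite in_itv.
  by move: (phi0 z (iv_conv iu iv' zi')); rewrite pz eqxx.
case: (lerP x1 x2) => l.
  apply: (key x1 x2) => //; rewrite ge_min le_max; apply/andP; split; apply/orP.
    by right; apply: ltW.
  by left; apply: ltW.
apply: (key x2 x1) => //; first exact: ltW.
rewrite ge_min le_max; apply/andP; split; apply/orP.
  by left; apply: ltW.
by right; apply: ltW.
Qed.
End Ev.

Section Core.
Variable R : realType.
Variables (c : R) (b : bool) (g : R -> R).
Hypothesis hder : ev c b (fun x => derivable g x 1).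

Local Notation E := (ev c b).
Definition e0 (Q : {poly {poly R}}) := E (fun x => peval2 Q x (g x) = 0).
Definition en (Q : {poly {poly R}}) := E (fun x => peval2 Q x (g x) != 0).

Lemma peval_cont Q x : derivable g x 1 -> {for x, continuous (fun t => peval2 Q t (g t))}.
Proof.
move=> dg; have H := peval_chain Q (derivableP dg).
have H1 : derivable (fun t => peval2 Q t (g t)) x 1 by case: H.
by apply/differentiable_continuous; rewrite -derivable1_diffP.
Qed.

Lemma e0_en (Q : {poly {poly R}}) : e0 Q -> en Q -> False.
Proof. by move=> H1 H2; have [x [-> ]] := ev_ex (ev_and H1 H2); rewrite eqxx. Qed.

Lemma e0_dvd (P Q : {poly {poly R}}) (k : {poly R}) W : k != 0 -> k *: Q = W * P -> e0 P -> e0 Q.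
Proof.
move=> k0 EQ HP; apply: ev_mono (ev_and (ev_poly c b k0) HP) => x [kx Px].
have : peval2 (k *: Q) x (g x) = 0 by rewrite EQ pevalM Px mulr0.
by rewrite pevalZ => /eqP; rewrite mulf_eq0 (negPf kx) /= => /eqP.
Qed.

Lemma e0_0 : e0 0.
Proof. by exists 1 => // x _; rewrite peval0. Qed.

Lemma two_le (n : nat) : n != 0%N -> n != 1%N -> (1 < n)%N.
Proof. by case: n => [|[|]]. Qed.

Definition Min (P : {poly {poly R}}) := forall Q : {poly {poly R}}, Q != 0 -> (size Q < size P)%N -> ~ e0 Q.

Lemma exists_min (F : {poly {poly R}}) : F != 0 -> e0 F -> exists P, [/\ P != 0, e0 P & Min P].
Proof.
have [n le] := ubnP (size F); elim: n F le => // n IH F le F0 eF.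
case: (pselect (exists Q : {poly {poly R}}, [/\ Q != 0, (size Q < size F)%N & e0 Q])) => [[Q [Q0 sQ eQ]]|N].
  by apply: (IH Q) => //; apply: leq_trans sQ _.
by exists F; split => // Q Q0 sQ eQ; apply: N; exists Q.
Qed.

Lemma min_size (P : {poly {poly R}}) : e0 P -> P != 0 -> (1 < size P)%N.
Proof.
move=> eP P0; rewrite ltnNge; apply/negP => sP.
have [k Pk] : exists k, P = k%:P by exists P`_0; apply: size1_polyC.
have k0 : k != 0 by move: P0; rewrite Pk polyC_eq0.
apply: (e0_en eP); apply: ev_mono (ev_poly c b k0) => x; by rewrite Pk pevalC.
Qed.

Lemma min_irr (P : {poly {poly R}}) : P != 0 -> e0 P -> Min P ->
  forall Q, coprimep P Q \/ P %| Q.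
Proof.
move=> P0 eP mP Q.
set D := gcdp P Q.
have D0 : D != 0 by rewrite gcdp_eq0 negb_and P0.
case/dvdpP: (dvdp_gcdl P Q) => [[c1 E'] /= c10 EP].
have E0 : E' != 0.
  apply/eqP => E0; move: EP; rewrite E0 mul0r => /eqP.
  by rewrite scale_poly_eq0 (negPf c10) (negPf P0).
have sP : size P = (size E' + size D).-1 by rewrite -(size_scale P c10) EP size_mul.
case: (eqVneq (size D) 1%N) => sD1; first by left; rewrite coprimep_def sD1.
have sD : (1 < size D)%N.
  by apply: two_le => //; rewrite size_poly_eq0.
case: (eqVneq (size E') 1%N) => sE1.
  right; have Ee : E' = (E'`_0)%:P by apply: size1_polyC; rewrite sE1.
  have ee0 : E'`_0 != 0.
    by apply: contraNneq E0 => h; rewrite Ee h.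
  have PD : P %| D.
    apply/dvdpP; exists (E'`_0, c1%:P) => //=.
    by rewrite mul_polyC EP [E' in RHS]Ee mul_polyC.
  exact: dvdp_trans PD (dvdp_gcdr P Q).
have sE : (1 < size E')%N.
  by apply: two_le => //; rewrite size_poly_eq0.
have ltD : (size D < size P)%N by rewrite sP; lia.
have ltE : (size E' < size P)%N by rewrite sP; lia.
have prodz : E (fun x => peval2 E' x (g x) * peval2 D x (g x) = 0).
  apply: ev_mono eP => x Px.
  by have := congr1 (fun p => peval2 p x (g x)) EP; rewrite /= pevalZ pevalM Px mulr0.
exfalso.
case: (boolP (coprimep E' D)) => cop.
  have r0 : resultant E' D != 0.
    by rewrite resultant_eq0 -leqNgt; move: cop; rewrite coprimep_def => /eqP ->.
  have [[u v] /= [_ _] Eres] := resultant_in_ideal sE sD.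
  have notboth : E (fun x => ~ (peval2 E' x (g x) = 0 /\ peval2 D x (g x) = 0)).
    apply: ev_mono (ev_poly c b r0) => x rx [h1 h2].
    have := congr1 (fun p => peval2 p x (g x)) Eres.
    rewrite /= pevalC pevalD !pevalM h1 h2 !mulr0 addr0 => rx0.
    by rewrite rx0 eqxx in rx.
  have cont : E (fun x => {for x, continuous (fun t => peval2 E' t (g t))} /\
                         {for x, continuous (fun t => peval2 D t (g t))}).
    by apply: ev_mono hder => x dx; split; apply: peval_cont.
  have orr : E (fun x => (peval2 E' x (g x) = 0 \/ peval2 D x (g x) = 0) /\
                        ~ (peval2 E' x (g x) = 0 /\ peval2 D x (g x) = 0)).
    apply: ev_mono (ev_and prodz notboth) => x [/eqP]; rewrite mulf_eq0 => /orP H nb.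
    by split => //; case: H => /eqP; [left|right].
  case: (@ev_conn _ c b (fun t => peval2 E' t (g t)) (fun t => peval2 D t (g t)) cont orr) => H.
    exact: (mP E').
  exact: (mP D).
set H := gcdp E' D.
have H0 : H != 0 by rewrite gcdp_eq0 negb_and E0.
have sH : (1 < size H)%N.
  by apply: two_le; [rewrite size_poly_eq0 | move: cop; rewrite coprimep_def].
case/dvdpP: (dvdp_gcdr E' D) => [[c2 D'] /= c20 ED].
case/dvdpP: (dvdp_gcdl E' D) => [[c3 E''] /= c30 EE].
have D'0 : D' != 0.
  apply/eqP => D'0; move: ED; rewrite D'0 mul0r => /eqP.
  by rewrite scale_poly_eq0 (negPf c20) (negPf D0).
have sD' : size D = (size D' + size H).-1 by rewrite -(size_scale D c20) ED size_mul.
have P20 : E' * D' != 0 by rewrite mulf_neq0.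
have sP2 : (size (E' * D')%R < size P)%N.
  rewrite size_mul // sP; lia.
apply: (mP (E' * D')) => //.
apply: ev_mono (ev_and prodz (ev_and (ev_poly c b c20) (ev_poly c b c30))) => x [/eqP].
rewrite pevalM mulf_eq0 => /orP [] /eqP h [h2 h3]; first by rewrite h mul0r.
have := congr1 (fun p => peval2 p x (g x)) ED; rewrite /= pevalZ pevalM h mulr0 => /eqP.
rewrite eq_sym mulf_eq0 => /orP [] /eqP h4; first by rewrite h4 mulr0.
have := congr1 (fun p => peval2 p x (g x)) EE; rewrite /= pevalZ pevalM h4 mulr0 => /eqP.
by rewrite mulf_eq0 (negPf h3) /= => /eqP ->; rewrite mul0r.
Qed.

Lemma min_ezn (P : {poly {poly R}}) : P != 0 -> e0 P -> Min P ->
  forall Q, e0 Q \/ en Q.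
Proof.
move=> P0 eP mP Q; case: (min_irr P0 eP mP Q) => [cop|].
  have sP := min_size eP P0.
  case: (leqP (size Q) 1) => sQ.
    have [k EQ] : exists k, Q = k%:P by exists Q`_0; apply: size1_polyC.
    case: (eqVneq k 0) => q0.
      by left; rewrite EQ q0; apply: e0_0.
    by right; apply: ev_mono (ev_poly c b q0) => x; rewrite EQ pevalC.
  have r0 : resultant P Q != 0.
    by rewrite resultant_eq0 -leqNgt; move: cop; rewrite coprimep_def => /eqP ->.
  have [[u v] /= [_ _] Eres] := resultant_in_ideal sP sQ.
  right; apply: ev_mono (ev_and (ev_poly c b r0) eP) => x [rx Px].
  apply/eqP => Qx; have := congr1 (fun p => peval2 p x (g x)) Eres.
  rewrite /= pevalC pevalD !pevalM Px Qx !mulr0 addr0 => rx0.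
  by rewrite rx0 eqxx in rx.
case/dvdpP => [[k W] /= k0 EQ]; left; exact: e0_dvd k0 EQ eP.
Qed.

Lemma deriv_neq0 (P : {poly {poly R}}) : (1 < size P)%N -> P^`() != 0.
Proof.
move=> sP; apply/eqP => D0.
have : P^`()`_(size P).-2 = 0 by rewrite D0 coef0.
rewrite coef_deriv.
have -> : (size P).-2.+1 = (size P).-1 by move: sP; case: (size P) => [|[|n]].
have lc : P`_(size P).-1 != 0.
  have : lead_coef P != 0 by rewrite lead_coef_eq0 -size_poly_eq0 -lt0n; apply: ltnW.
  by [].
move=> /eqP; rewrite -mulr_natr mulf_eq0 (negPf lc) /=.
rewrite -polyC_natr polyC_eq0 pnatr_eq0 => /eqP; move: sP; by case: (size P) => [|[|n]].
Qed.

Lemma min_dy (P : {poly {poly R}}) : P != 0 -> e0 P -> Min P -> en P^`().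
Proof.
move=> P0 eP mP; case: (min_ezn P0 eP mP P^`()) => // H.
exfalso; apply: (mP P^`()) => //.
  exact/deriv_neq0/min_size.
exact: lt_size_deriv.
Qed.

Lemma core (F : {poly {poly R}}) : F != 0 -> e0 F ->
  exists P, [/\ e0 P, en P^`() & forall Q, e0 Q \/ en Q].
Proof.
move=> F0 eF; have [P [P0 eP mP]] := exists_min F0 eF.
by exists P; split; [exact: eP | exact: (min_dy P0 eP mP) | exact: (min_ezn P0 eP mP)].
Qed.

End Core.

Section Anal.
Variable R : realType.

Lemma mvt_seg (f f1 : R -> R) (u w : R) : u < w ->
  (forall y, u <= y <= w -> is_derive y 1 f (f1 y)) ->
  exists2 z, u < z < w & f w - f u = f1 z * (w - u).
Proof.
move=> uw H.
have cont : {within `[u, w], continuous f}.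
  apply: derivable_within_continuous => y; rewrite in_itv /= => /H hy.
  by case: hy.
have H' : forall y, y \in `]u, w[ -> is_derive y 1 f (f1 y).
  move=> y; rewrite in_itv /= => /andP[h1 h2]; apply: H.
  by apply/andP; split; apply: ltW.
have [z zi Ez] := MVT uw H' cont.
by exists z => //; rewrite in_itv /= in zi.
Qed.

Lemma const_der (f : R -> R) (m c : R) b :
  ev c b (fun x => is_derive x 1 f m) -> exists k, ev c b (fun x => f x = m * x + k).
Proof.
move=> [e e0 H]; have [x0 ix0] := iv_ex c b e0.
exists (f x0 - m * x0); exists e => // x ix.
case: (ltgtP x0 x) => [lt|lt|->]; last by lra.
  have [z _ Ez] := @mvt_seg f (fun _ => m) x0 x lt (fun y hy => H y (iv_conv ix0 ix hy)).
  lra.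
have [z _ Ez] := @mvt_seg f (fun _ => m) x x0 lt (fun y hy => H y (iv_conv ix ix0 hy)).
lra.
Qed.

Lemma noconv (f f1 f2 : R -> R) (u w : R) : u < w ->
  (forall y, u <= y <= w -> [/\ is_derive y 1 f (f1 y), is_derive y 1 f1 (f2 y) & f2 y < 0]) ->
  ~ convex_on f [set z | u <= z <= w].
Proof.
move=> uw H cv.
set m := (u + w) / 2.
have um : u < m by rewrite /m; lra.
have mw : m < w by rewrite /m; lra.
have [z1 /andP[z1a z1b] E1] := @mvt_seg f f1 u m um
   (fun y hy => let: And3 h _ _ := H y (ltac:(move/andP: hy => [? ?]; apply/andP; split; lra)) in h).
have [z2 /andP[z2a z2b] E2] := @mvt_seg f f1 m w mw
   (fun y hy => let: And3 h _ _ := H y (ltac:(move/andP: hy => [? ?]; apply/andP; split; lra)) in h).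
have z12 : z1 < z2 by lra.
have [z3 /andP[z3a z3b] E3] := @mvt_seg f1 f2 z1 z2 z12
   (fun y hy => let: And3 _ h _ := H y (ltac:(move/andP: hy => [? ?]; apply/andP; split; lra)) in h).
have [_ _ neg] := H z3 (ltac:(apply/andP; split; lra)).
have lt12 : f1 z2 < f1 z1.
  have : f2 z3 * (z2 - z1) < 0 by rewrite pmulr_llt0 //; lra.
  lra.
have hu : u <= u <= w by apply/andP; split; lra.
have hw : u <= w <= w by apply/andP; split; lra.
have := cv u w (1 / 2) hu hw (ltac:(lra)) (ltac:(lra)).
have -> : 1 / 2 * u + (1 - 1 / 2) * w = m by rewrite /m; lra.
have : f1 z2 * (w - m) < f1 z1 * (m - u).
  have -> : w - m = m - u by rewrite /m; lra.
  by rewrite ltr_pM2r //; lra.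
lra.
Qed.

Lemma noconc (f f1 f2 : R -> R) (u w : R) : u < w ->
  (forall y, u <= y <= w -> [/\ is_derive y 1 f (f1 y), is_derive y 1 f1 (f2 y) & 0 < f2 y]) ->
  ~ concave_on f [set z | u <= z <= w].
Proof.
move=> uw H; apply: (@noconv (fun x => - f x) (fun x => - f1 x) (fun x => - f2 x) u w uw).
move=> y hy; have [h1 h2 h3] := H y hy; split.
- exact: is_deriveN.
- exact: is_deriveN.
- by rewrite oppr_lt0.
Qed.
End Anal.

Section Local.
Variable R : realType.
Variables (g : R -> R) (P : {poly {poly R}}).
Local Notation ev2 Q x := (peval2 Q x (g x)).
Definition Px := dx P.
Definition Py := P^`().
Definition phi t := - ev2 Px t / ev2 Py t.
Definition Mp := dx Px * Py * Py - Px^`() * Px * Py - dx Py * Px * Py + Py^`() * Px * Px.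
Definition psi t := - ev2 Mp t / (ev2 Py t) ^+ 3.
Definition W x := [/\ derivable g x 1, ev2 P x = 0 & ev2 Py x != 0].

Lemma gder x : (\forall y \near x, W y) -> is_derive x 1 g (phi x).
Proof.
move=> Wn; have [dg Px0 Pyx] : W x := nbhs_singleton Wn.
have ch := peval_chain P (derivableP dg).
have z : 'D_1 (fun t => ev2 P t) x = 0.
  rewrite (@near_eq_derive _ _ _ _ (cst 0)) ?derive_cst //.
  by apply: filterS Wn => y [].
case: ch => _ dv; rewrite dv in z.
apply: DeriveDef => //; rewrite /phi -/Py -/Px.
move: z; rewrite /Px /Py; move: ('D_1 g x) => D z.
have hA : ev2 (dx P) x = - (ev2 P^`() x * D) by lra.
rewrite hA; field.
by [].
Qed.

Lemma g2der x : (\forall y \near x, W y) -> is_derive x 1 phi (psi x).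
Proof.
move=> Wn; have [dg Px0 Pyx] : W x := nbhs_singleton Wn.
have gd := gder Wn.
have hA := peval_chain Px gd.
have hB := peval_chain Py gd.
have dB : derivable (fun t => ev2 Py t) x 1 by case: hB.
have hBi : is_derive x 1 (fun t => (ev2 Py t)^-1)
    (- (ev2 Py x) ^- 2 *: (ev2 (dx Py) x + ev2 Py^`() x * phi x)).
  apply: DeriveDef; first exact: derivableV.
  by rewrite deriveV //; case: hB => _ ->.
have hM := is_deriveN (is_deriveM hA hBi).
have -> : psi x = - ((ev2 Px x) *: (- (ev2 Py x) ^- 2 *: (ev2 (dx Py) x + ev2 Py^`() x * phi x))
   + (ev2 Py x)^-1 *: (ev2 (dx Px) x + ev2 Px^`() x * phi x)).
  rewrite /psi /phi /Mp /GRing.scale /= !(pevalB, pevalD, pevalM).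
  field; by [].
have E : phi = - ((fun t => ev2 Px t) * (fun t => (ev2 Py t)^-1)).
  by apply/funext => t; rewrite /phi /= mulNr.
by rewrite -E in hM.
Qed.

End Local.

Section Main.
Variable R : realType.

Lemma conv_sub (f : R -> R) (A B : set R) : B `<=` A -> convex_on f A -> convex_on f B.
Proof. by move=> BA H x y t Bx By; apply: H; apply: BA. Qed.

Lemma psi_sign (g : R -> R) (P : {poly {poly R}}) y :
  peval2 (Py P) y (g y) != 0 ->
  psi g P y = - (peval2 (Mp P) y (g y) * peval2 (Py P) y (g y)) / (peval2 (Py P) y (g y)) ^+ 4.
Proof. move=> B0; rewrite /psi; field; by []. Qed.

Lemma local_main (c : R) (b : bool) (g : R -> R) (F : {poly {poly R}}) :
  ev c b (fun x => derivable g x 1) -> F != 0 -> e0 c b g F ->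
  (forall m k, ~ ev c b (fun x => g x = m * x + k)) ->
  ev c b (fun x => ~ local_min_point g x) /\ ev c b (fun x => ~ inflection_point g x).
Proof.
move=> hder F0 eF hlin.
have [P [eP eny ezn]] := core hder F0 eF.
have hW : ev c b (W g P).
  by apply: ev_mono (ev_and hder (ev_and eP eny)) => x [h1 [h2 h3]]; split.
have hW1 := ev_loc hW; have hW2 := ev_loc hW1.
split.
  case: (ezn (Px P)) => [e|n].
    exfalso.
    have : ev c b (fun x => is_derive x 1 g 0).
      apply: ev_mono (ev_and hW1 e) => x [Wn ex].
      by have := gder Wn; rewrite /phi ex oppr0 mul0r.
    by move/const_der => [k hk]; apply: (hlin 0 k).
  apply: ev_mono (ev_and hW1 n) => x [Wn nx] lm.
  have gd := gder Wn.
  have [_ _ Bx] : W g P x := nbhs_singleton Wn.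
  have H2 : \forall y \near x, g x <= g y /\ W g P y.
    by near=> y; split; near: y.
  move/nearE: H2 => [d d0 Hd].
  have z : is_derive x 1 g 0.
    apply: (@derive1_at_min _ g (x - d / 2) (x + d / 2)).
    - lra.
    - move=> t; rewrite in_itv /= => /andP[t1 t2].
      by have [_ [] ] := Hd t (ltac:(rewrite ltr_norml; apply/andP; split; lra)).
    - by rewrite in_itv /=; apply/andP; split; lra.
    - move=> t; rewrite in_itv /= => /andP[t1 t2].
      by have [] := Hd t (ltac:(rewrite ltr_norml; apply/andP; split; lra)).
  case: z => _ z; case: gd => _; rewrite z => /esym/eqP.
  by rewrite /phi mulf_eq0 invr_eq0 oppr_eq0 (negPf nx) (negPf Bx).
case: (ezn (Mp P)) => [e|n].
  exfalso.
  have h1 : ev c b (fun x => is_derive x 1 (phi g P) 0).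
    apply: ev_mono (ev_and hW1 e) => x [Wn ex].
    by have := g2der Wn; rewrite /psi ex oppr0 mul0r.
  have [k hk] := const_der h1.
  have h2 : ev c b (fun x => is_derive x 1 g k).
    apply: ev_mono (ev_and hW1 hk) => x [Wn ex].
    by have := gder Wn; rewrite ex mul0r add0r.
  have [k' hk'] := const_der h2.
  exact: (hlin k k').
apply: ev_mono (ev_and hW2 n) => x [Wnn nx] [d d0 infl].
have Wn := nbhs_singleton Wnn.
have [dgx _ Bx] : W g P x := nbhs_singleton Wn.
pose s := fun y => peval2 (Mp P) y (g y) * peval2 (Py P) y (g y).
have sc : {for x, continuous s}.
  by apply: continuousM; apply: peval_cont.
have sx : s x != 0 by rewrite mulf_neq0.
have key : forall (sg : bool), (if sg then 0 < s x else s x < 0) ->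
  exists2 del : R, 0 < del & forall y, `|x - y| < del ->
    [/\ is_derive y 1 g (phi g P y), is_derive y 1 (phi g P) (psi g P y) &
        if sg then psi g P y < 0 else 0 < psi g P y].
  move=> sg hs.
  have Hn : \forall y \near x, (if sg then 0 < s y else s y < 0) /\ \forall z \near y, W g P z.
    have cg := cvgr_gt (s x) sc 0; have cl := cvgr_lt (s x) sc 0.
    case: sg hs => hs; near=> y; split.
    - by near: y; apply: cg.
    - by near: y.
    - by near: y; apply: cl.
    - by near: y.
  move/nearE: Hn => [del del0 Hd]; exists del => // y /Hd [sy Wy].
  have [_ _ By] : W g P y := nbhs_singleton Wy.
  split; [exact: gder|exact: g2der|].
  rewrite psi_sign // -/s.
  have B4 : 0 < peval2 (Py P) y (g y) ^+ 4 by rewrite exprn_even_gt0.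
  clear Hd; case: sg sy hs => sy _.
    by rewrite mulNr oppr_lt0 divr_gt0.
  by rewrite mulNr oppr_gt0 pmulr_llt0 // invr_gt0.
have [sg hsg] : exists sg : bool, if sg then 0 < s x else s x < 0.
  by move: sx; rewrite neq_lt => /orP [h|h]; [exists false|exists true].
have [del del0 Hk] := key sg hsg.
pose d' := Num.min d (del / 2).
have d'0 : 0 < d' by rewrite lt_min d0 /=; lra.
have d'd : d' <= d by rewrite ge_min lexx.
have d'del : d' <= del / 2 by rewrite ge_min lexx orbT.
have nr : forall y, x - d' <= y <= x + d' -> `|x - y| < del.
  by move=> y /andP[y1 y2]; rewrite ltr_norml; apply/andP; split; lra.
have lt1 : x - d' < x by lra.
have lt2 : x < x + d' by lra.
have sub1 : [set z | x - d' <= z <= x] `<=` [set z | x - d <= z <= x].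
  by move=> z /= /andP[z1 z2]; apply/andP; split; lra.
have sub2 : [set z | x <= z <= x + d'] `<=` [set z | x <= z <= x + d].
  by move=> z /= /andP[z1 z2]; apply/andP; split; lra.
have H1 : forall y, x - d' <= y <= x -> `|x - y| < del.
  by move=> y /andP[y1 y2]; apply: nr; apply/andP; split; lra.
have H2 : forall y, x <= y <= x + d' -> `|x - y| < del.
  by move=> y /andP[y1 y2]; apply: nr; apply/andP; split; lra.
case: sg {hsg key} Hk => Hk.
  case: infl => [[cv _]|[_ cv]].
    apply: (@noconv _ g (phi g P) (psi g P) (x - d') x lt1).
      by move=> y /H1 /Hk.
    exact: conv_sub sub1 cv.
  apply: (@noconv _ g (phi g P) (psi g P) x (x + d') lt2).
    by move=> y /H2 /Hk.
  exact: conv_sub sub2 cv.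
case: infl => [[_ cc]|[cc _]].
  apply: (@noconc _ g (phi g P) (psi g P) x (x + d') lt2).
    by move=> y /H2 /Hk.
  exact: conv_sub sub2 cc.
apply: (@noconc _ g (phi g P) (psi g P) (x - d') x lt1).
  by move=> y /H1 /Hk.
exact: conv_sub sub1 cc.
Unshelve. all: by end_near.
Qed.
End Main.

Section Glob.
Variable R : realType.
Local Open Scope ereal_scope.
Lemma oitv_near (l u : \bar R) (x : R) : oitv l u x ->
  exists2 d : R, (0 < d)%R & forall y : R, (`|x - y| < d)%R -> oitv l u y.
Proof.
move=> [hl hu].
have [d1 d10 H1] : exists2 d1 : R, (0 < d1)%R & forall y : R, (`|x - y| < d1)%R -> l < y%:E.
  case: l hl => [r| |] hl.
  - exists (x - r)%R; first by rewrite lte_fin in hl; rewrite subr_gt0.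
    move=> y; rewrite ltr_norml lte_fin => /andP[a1 a2]; rewrite lte_fin in hl; lra.
  - by [].
  - by exists 1%R => // y _; apply: ltNyr.
have [d2 d20 H2] : exists2 d2 : R, (0 < d2)%R & forall y : R, (`|x - y| < d2)%R -> y%:E < u.
  case: u hu => [r| |] hu.
  - exists (r - x)%R; first by rewrite lte_fin in hu; rewrite subr_gt0.
    move=> y; rewrite ltr_norml lte_fin => /andP[a1 a2]; rewrite lte_fin in hu; lra.
  - by exists 1%R => // y _; apply: ltry.
  - by [].
exists (Num.min d1 d2); first by rewrite lt_min d10 d20.
move=> y; rewrite lt_min => /andP[a1 a2]; split; [exact: H1|exact: H2].
Qed.

Lemma oitv_interval (l u : \bar R) : is_interval (oitv l u).
Proof.
move=> x y [hx1 hx2] [hy1 hy2] z /andP[xz zy]; split.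
  by apply: (lt_le_trans hx1); rewrite lee_fin.
by apply: (le_lt_trans _ hy2); rewrite lee_fin.
Qed.
Local Close Scope ereal_scope.

Lemma peval_comp (F : {poly {poly R}}) (h : {poly R}) (x : R) :
  (F.[h]).[x] = peval2 F x h.[x].
Proof.
elim/poly_ind: F => [|F c IH]; first by rewrite horner0 peval0 horner0.
by rewrite pevalMX hornerMXaddC hornerD hornerM IH.
Qed.

Section Lin.
Variables (f : {poly {poly R}}) (g : R -> R) (i1 i2 j1 j2 : \bar R).
Hypothesis hgJ : forall x, oitv i1 i2 x -> oitv j1 j2 (g x).
Hypothesis hder : forall x, oitv i1 i2 x -> derivable g x 1.
Hypothesis hgr : forall x, oitv i1 i2 x -> peval2 f x (g x) = 0.
Hypothesis hgr2 : forall x y, oitv i1 i2 x -> oitv j1 j2 y -> peval2 f x y = 0 -> g x = y.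

Lemma lin_global (u v m k : R) : u < v -> (forall x, u < x < v -> oitv i1 i2 x) ->
  (forall x, u < x < v -> g x = m * x + k) -> forall x, oitv i1 i2 x -> g x = m * x + k.
Proof.
move=> uv uvI uvg.
pose q := f.[m *: 'X + k%:P].
have qE : forall x, q.[x] = peval2 f x (m * x + k).
  by move=> x; rewrite peval_comp hornerD hornerZ hornerX hornerC.
have q0 : q = 0.
  apply/eqP/negPn/negP => qn.
  have [d d0 H] := poly_punct ((u + v) / 2) qn.
  pose y := (u + v) / 2 + Num.min d ((v - u) / 2) / 2.
  have md : 0 < Num.min d ((v - u) / 2) by rewrite lt_min d0 /=; lra.
  have md1 : Num.min d ((v - u) / 2) <= d by rewrite ge_min lexx.
  have md2 : Num.min d ((v - u) / 2) <= (v - u) / 2 by rewrite ge_min lexx orbT.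
  have yuv : u < y < v by rewrite /y; apply/andP; split; lra.
  have qy : q.[y] = 0 by rewrite qE -uvg // hgr //; apply: uvI.
  have yc : y != (u + v) / 2 by rewrite /y gt_eqF //; lra.
  have yd : `|y - (u + v) / 2| < d.
    rewrite /y (_ : (u + v) / 2 + Num.min d ((v - u) / 2) / 2 - (u + v) / 2 = Num.min d ((v - u) / 2) / 2); last by lra.
    rewrite ger0_norm; lra.
  by have := H y yc yd; rewrite qy eqxx.
have step3 : forall x, oitv i1 i2 x -> oitv j1 j2 (m * x + k) -> g x = m * x + k.
  by move=> x Ix Jx; apply: hgr2 => //; rewrite -qE q0 horner0.
pose S := [set x | oitv i1 i2 x /\ g x = m * x + k].
have conI : connected (oitv i1 i2) by apply/connected_intervalP/oitv_interval.
have SI : S = oitv i1 i2.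
  apply: conI.
  - exists ((u + v) / 2); split; [apply: uvI|apply: uvg]; apply/andP; split; lra.
  - exists [set x | oitv j1 j2 (m * x + k)].
      rewrite openE => x /oitv_near [e e0 He].
      apply/nearE; exists (e / (`|m| + 1)); first by rewrite divr_gt0 //; lra.
      move=> y hy; apply: He.
      have -> : (m * x + k - (m * y + k)) = m * (x - y) by ring.
      rewrite normrM.
      have h1 : `|x - y| * (`|m| + 1) < e.
        by rewrite -ltr_pdivlMr //; lra.
      have h2 : 0 <= `|x - y| by [].
      have h3 : 0 <= `|m| by [].
      nra.
    apply/seteqP; split => x.
      by move=> [Ix Ex]; split => //=; rewrite -Ex; apply: hgJ.
    by move=> [Ix Jx]; split => //; apply: step3.
  - exists (closure S); first exact: closed_closure.
    apply/seteqP; split => x.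
      by move=> Sx; split; [case: Sx|apply: subset_closure].
    move=> [Ix cx]; split => //.
    apply/eqP/negPn/negP => nx.
    have hc : {for x, continuous (fun t => g t - (m * t + k))}.
      apply: continuousB.
        by apply/differentiable_continuous; rewrite -derivable1_diffP; apply: hder.
      apply: continuousD; last exact: cst_continuous.
      apply: continuousM; [exact: cst_continuous|exact: cvg_id].
    have nx' : g x - (m * x + k) != 0 by rewrite subr_eq0.
    have nb : \forall t \near x, g t - (m * t + k) != 0 := cvgr_neq0 _ hc nx'.
    have nb2 : \forall t \near x, g t - (m * t + k) != 0 by apply: nb; exact: nbhs_filter.
    have [t [[It Et] Nt]] := cx _ nb2.
    by move: Nt; rewrite /= Et subrr eqxx.
move=> x Ix; have : S x by rewrite SI.
by case.
Qed.
End Lin.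
End Glob.

Lemma fin_local (R : realType) (Bad : R -> Prop) (a b : R) :
  (forall c, a <= c <= b -> ev c true (fun x => ~ Bad x) /\ ev c false (fun x => ~ Bad x)) ->
  finite_set [set x | a <= x <= b /\ Bad x].
Proof.
move=> H.
have H' : forall c, exists d : R, a <= c <= b -> 0 < d /\ forall y, `|c - y| < d -> y != c -> ~ Bad y.
  move=> c; case: (pselect (a <= c <= b)) => hc; last by exists 1.
  have [[e1 e10 H1] [e2 e20 H2]] := H c hc.
  exists (Num.min e1 e2) => _; split; first by rewrite lt_min e10 e20.
  move=> y; rewrite lt_min => /andP[y1 y2] yc.
  move: y1 y2; rewrite !ltr_norml => /andP[y1 y1'] /andP[y2 y2'].
  case: (ltgtP c y) => [cy|yc'|E]; last by rewrite E eqxx in yc.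
    by apply: H1; rewrite /iv /=; apply/andP; split; lra.
  by apply: H2; rewrite /iv /=; apply/andP; split; lra.
have [dl Hdl] := choice H'.
have cpt : compact `[a, b] := @segment_compact R a b.
rewrite compact_cover in cpt.
have [D' sub cov] : finite_subset_cover [set c | a <= c <= b] (fun c => ball c (dl c)) `[a, b].
  apply: cpt; first by move=> i _; exact: ball_open.
  move=> x /=; rewrite in_itv /= => hx; exists x => //.
  by apply: ballxx; case: (Hdl x hx).
apply: (sub_finite_set _ (finite_fset D')).
move=> x [hx bx].
have [i Di xi] := cov x (ltac:(by rewrite /= in_itv)).
have iD : a <= i <= b by have := sub i Di; rewrite inE.
case: (eqVneq x i) => [->|xi']; first exact: Di.
have [_ Hi] := Hdl i iD.
by exfalso; apply: (Hi x _ xi' bx).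
Qed.

Unset Implicit Arguments.

Theorem corollary2p2 (R : realType) (f : {poly {poly R}}) (x0 y0 : R)
  (i1 i2 j1 j2 : \bar R) (g : R -> R) (a b : R) :
  peval2 f x0 y0 = 0 ->
  pdy f x0 y0 != 0 ->
  oitv i1 i2 x0 -> oitv j1 j2 y0 ->
  (forall x, oitv i1 i2 x -> oitv j1 j2 (g x)) ->
  (forall x, oitv i1 i2 x -> derivable g x 1) ->
  g x0 = y0 ->
  [set xy : R * R | oitv i1 i2 xy.1 /\ oitv j1 j2 xy.2 /\ peval2 f xy.1 xy.2 = 0]
    = [set (x, g x) | x in oitv i1 i2] ->
  [set x | a <= x <= b] `<=` oitv i1 i2 ->
  ~ (exists m c : R, forall x, oitv i1 i2 x -> g x = m * x + c) ->
  finite_set [set x | a <= x <= b /\ inflection_point g x] /\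
  finite_set [set x | a <= x <= b /\ local_min_point g x].
Proof.
move=> h1 h2 hx0 hy0 hgJ hder hg0 hset hab hnl.
have f0 : f != 0.
  by apply/eqP => f0; move: h2; rewrite f0 /pdy deriv0 peval0 eqxx.
have hgr : forall x, oitv i1 i2 x -> peval2 f x (g x) = 0.
  move=> x Ix; have : [set (x, g x) | x in oitv i1 i2] (x, g x) by exists x.
  by rewrite -hset => -[_ [_ ]].
have hgr2 : forall x y, oitv i1 i2 x -> oitv j1 j2 y -> peval2 f x y = 0 -> g x = y.
  move=> x y Ix Jy fxy.
  have : [set xy : R * R | oitv i1 i2 xy.1 /\ oitv j1 j2 xy.2 /\ peval2 f xy.1 xy.2 = 0] (x, y)
    by split.
  by rewrite hset => -[x' _ [<- <-]].
have nI : forall c, oitv i1 i2 c -> \forall y \near c, oitv i1 i2 y.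
  by move=> c Ic; apply/nearE; apply: oitv_near.
have hlin : forall c bb m k, oitv i1 i2 c -> ~ ev c bb (fun x => g x = m * x + k).
  move=> c bb m k Ic hev.
  have eI : ev c bb (oitv i1 i2) by apply: ev_nbhs; apply: nI.
  have [e e0 He] := ev_and eI hev.
  apply: hnl; exists m, k.
  clear hev eI; case: bb He => He.
    apply: (@lin_global _ f g i1 i2 j1 j2 hgJ hder hgr hgr2 c (c + e) m k).
    - lra.
    - by move=> x hx; case: (He x hx).
    - by move=> x hx; case: (He x hx).
  apply: (@lin_global _ f g i1 i2 j1 j2 hgJ hder hgr hgr2 (c - e) c m k).
  - lra.
  - by move=> x hx; case: (He x hx).
  - by move=> x hx; case: (He x hx).
have loc : forall c, oitv i1 i2 c -> forall bb,
    ev c bb (fun x => ~ local_min_point g x) /\ ev c bb (fun x => ~ inflection_point g x).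
  move=> c Ic bb; apply: (@local_main _ c bb g f).
  - by apply: ev_mono (ev_nbhs bb (nI c Ic)) => x; apply: hder.
  - exact: f0.
  - by apply: ev_mono (ev_nbhs bb (nI c Ic)) => x; apply: hgr.
  - by move=> m k; apply: hlin.
split; apply: fin_local => c hc; have Ic := hab c hc;
  have [l1 i1'] := loc c Ic true; have [l2 i2'] := loc c Ic false; by split.
Qed.
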